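(* Let $\mathcal{P}\subset\mathbb{Q}^n$ be a finite point set whose position vectors span $\mathbb{R}^n$, and let $\mathbb{R}^n=W_1\oplus\cdots\oplus W_r$ be a decomposition into pairwise orthogonal subspaces. For $\ell\in[r]$ let $\mathrm{proj}_\ell$ denote orthogonal projection onto $W_\ell$ and $\mathcal{P}_\ell=\mathrm{proj}_\ell(\mathcal{P})$. Let $\pi$ be a permutation of $\mathcal{P}$. Then $\pi$ is a geometric automorphism of $\mathcal{P}$ such that $A_\pi(W_\ell)=W_\ell$ for each $\ell\in[r]$ if and only if $\pi$ is an induced geometric automorphism of each $\mathcal{P}_\ell$, $1\le\ell\le r$.
   Context: A geometric automorphism of a finite point set $\mathcal{Q}$ (in a Euclidean space) is a permutation $\sigma$ of $\mathcal{Q}$ with $\|q\|=\|\sigma(q)\|$ and $\|q-q'\|=\|\sigma(q)-\sigma(q')\|$ for all $q,q'\in\mathcal{Q}$. For $\mathcal{P}$ spanning $\mathbb{R}^n$ and $\pi$ a geometric automorphism of $\mathcal{P}$, $A_\pi$ is the unique orthogonal matrix with $A_\pi p=\pi(p)$ for all $p\in\mathcal{P}$. A subset $\Delta\subseteq\mathcal{P}$ is an $(\ell)$-equivalence class if $\Delta=\mathrm{proj}_\ell^{-1}(q)\cap\mathcal{P}$ for some $q\in\mathcal{P}_\ell$. A permutation $\pi$ of $\mathcal{P}$ respects $\mathcal{P}_\ell$ if it maps every $(\ell)$-equivalence class onto an $(\ell)$-equivalence class; it then induces the permutation $\pi_\ell$ of $\mathcal{P}_\ell$ given by $\pi_\ell(q)=\mathrm{proj}_\ell(\pi(\mathrm{proj}_\ell^{-1}(q)))$.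 $\pi$ is an induced geometric automorphism of $\mathcal{P}_\ell$ if $\pi$ respects $\mathcal{P}_\ell$ and $\pi_\ell$ is a geometric automorphism of $\mathcal{P}_\ell$. *)

(* Defs.v *)
From HB Require Import structures.
From mathcomp Require Import all_boot all_order all_fingroup all_algebra.
From mathcomp Require Import reals.
Set Implicit Arguments. Unset Strict Implicit. Unset Printing Implicit Defensive.
Import Order.TTheory GRing.Theory Num.Theory.
Local Open Scope ring_scope.

Section Defs.
Variables (R : realType) (n : nat).
Local Notation V := 'cV[R]_n.

Definition dotv (u v : V) : R := (u^T *m v) 0 0.
Definition vnorm (v : V) : R := Num.sqrt (dotv v v).

Definition rational_pt (v : V) : Prop := exists q : 'cV[rat]_n, v = map_mx ratr q.

Definition is_orth_proj (W : {vspace V}) (f : V -> V) : Prop :=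
  forall v, f v \in W /\ forall w, w \in W -> dotv (v - f v) w = 0.

(* A finite point set P = {p i | i < m} (p injective); a permutation of P is
   given by a permutation pi of the indices. *)
Definition geom_aut_idx m (p : 'I_m -> V) (pi : {perm 'I_m}) : Prop :=
  forall i j, vnorm (p (pi i)) = vnorm (p i) /\
              vnorm (p i - p j) = vnorm (p (pi i) - p (pi j)).

Definition geom_aut_on (Q : seq V) (sigma : V -> V) : Prop :=
  [/\ {in Q, forall q, sigma q \in Q}, {in Q &, injective sigma} &
      {in Q &, forall q q', vnorm q = vnorm (sigma q) /\
                            vnorm (q - q') = vnorm (sigma q - sigma q')}].

Definition eq_class m (p : 'I_m -> V) (f : V -> V) (q : V) : {set 'I_m} :=
  [set k | f (p k) == q].

Definition proj_set m (p : 'I_m -> V) (f : V -> V) : seq V :=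
  [seq f (p k) | k <- enum 'I_m].

Definition respects m (p : 'I_m -> V) (f : V -> V) (pi : {perm 'I_m}) : Prop :=
  forall q, q \in proj_set p f ->
    exists2 q', q' \in proj_set p f & pi @: eq_class p f q = eq_class p f q'.

(* induced map pi_f(q) = f(pi(f^{-1}(q) ∩ P)) (well defined when pi respects P_f) *)
Definition induced_map m (p : 'I_m -> V) (f : V -> V) (pi : {perm 'I_m}) (q : V) : V :=
  if [pick k | f (p k) == q] is Some k then f (p (pi k)) else q.

Definition induced_geom_aut m (p : 'I_m -> V) (f : V -> V) (pi : {perm 'I_m}) : Prop :=
  respects p f pi /\ geom_aut_on (proj_set p f) (induced_map p f pi).

End Defs.

(* Main.v *)
Require Import Defs.
From HB Require Import structures.
From mathcomp Require Import all_boot all_order all_fingroup all_algebra.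
From mathcomp Require Import reals.
From mathcomp Require Import lra.
Import Order.TTheory GRing.Theory Num.Theory.
Local Open Scope ring_scope.
Set Implicit Arguments. Unset Strict Implicit. Unset Printing Implicit Defensive.

Section Dot.
Variables (R : realType) (n : nat).
Local Notation V := 'cV[R]_n.
Implicit Types (u v w : V).

Lemma dotvE u v : dotv u v = \sum_i u i 0 * v i 0.
Proof. by rewrite /dotv mxE; apply: eq_bigr => i _; rewrite mxE. Qed.

Lemma dotvC u v : dotv u v = dotv v u.
Proof. by rewrite !dotvE; apply: eq_bigr => i _; rewrite mulrC. Qed.

Lemma dotvDl u v w : dotv (u + v) w = dotv u w + dotv v w.
Proof. by rewrite !dotvE -big_split; apply: eq_bigr => i _; rewrite mxE mulrDl. Qed.

Lemma dotvZl k u w : dotv (k *: u) w = k * dotv u w.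
Proof. by rewrite !dotvE mulr_sumr; apply: eq_bigr => i _; rewrite mxE mulrA. Qed.

Lemma dotvNl u w : dotv (- u) w = - dotv u w.
Proof. by rewrite -scaleN1r dotvZl mulN1r. Qed.

Lemma dotvBl u v w : dotv (u - v) w = dotv u w - dotv v w.
Proof. by rewrite dotvDl dotvNl. Qed.

Lemma dotvDr u v w : dotv w (u + v) = dotv w u + dotv w v.
Proof. by rewrite !(dotvC w) dotvDl. Qed.
Lemma dotvZr k u w : dotv w (k *: u) = k * dotv w u.
Proof. by rewrite !(dotvC w) dotvZl. Qed.
Lemma dotvBr u v w : dotv w (u - v) = dotv w u - dotv w v.
Proof. by rewrite !(dotvC w) dotvBl. Qed.
Lemma dotv0l w : dotv 0 w = 0.
Proof. by rewrite -(scale0r 0) dotvZl mul0r. Qed.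
Lemma dotv0r w : dotv w 0 = 0.
Proof. by rewrite dotvC dotv0l. Qed.

Lemma dotv_sumr I (s : seq I) (P : pred I) (F : I -> V) w :
  dotv w (\sum_(i <- s | P i) F i) = \sum_(i <- s | P i) dotv w (F i).
Proof.
elim/big_rec2: _ => [|i x y _ Hxy]; first by rewrite dotv0r.
by rewrite dotvDr Hxy.
Qed.
Lemma dotv_suml I (s : seq I) (P : pred I) (F : I -> V) w :
  dotv (\sum_(i <- s | P i) F i) w = \sum_(i <- s | P i) dotv (F i) w.
Proof. by rewrite dotvC dotv_sumr; apply: eq_bigr => i _; rewrite dotvC. Qed.

Lemma dotv_ge0 v : 0 <= dotv v v.
Proof. by rewrite dotvE sumr_ge0 // => i _; rewrite -expr2 sqr_ge0. Qed.

Lemma dotv_eq0 v : dotv v v = 0 -> v = 0.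
Proof.
rewrite dotvE => /eqP; rewrite psumr_eq0 => [/allP H|i _]; last by rewrite -expr2 sqr_ge0.
apply/matrixP => i j; rewrite (ord1 j) mxE.
have /implyP := H i (mem_index_enum _) => /(_ isT).
by rewrite mulf_eq0 orbb => /eqP.
Qed.

Lemma dotv_mull (A : 'M[R]_n) u v : dotv (A *m u) v = dotv u (A^T *m v).
Proof. by rewrite /dotv trmx_mul mulmxA. Qed.

Lemma vnorm_sqr v : vnorm v ^+ 2 = dotv v v.
Proof. by rewrite /vnorm sqr_sqrtr // dotv_ge0. Qed.

Lemma vnorm_eq u v : vnorm u = vnorm v <-> dotv u u = dotv v v.
Proof.
split => [H|H]; last by rewrite /vnorm H.
by rewrite -!vnorm_sqr H.
Qed.

Lemma polar (a b a' b' : V) : dotv a a = dotv a' a' -> dotv b b = dotv b' b' ->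
  dotv (a - b) (a - b) = dotv (a' - b') (a' - b') -> dotv a b = dotv a' b'.
Proof.
rewrite !dotvBl !dotvBr (dotvC b a) (dotvC b' a') => h1 h2 h3.
lra.
Qed.

End Dot.


Section Proj.
Variables (R : realType) (n : nat).
Local Notation V := 'cV[R]_n.
Variables (W : {vspace V}) (f : V -> V).
Hypothesis Hf : is_orth_proj W f.

Lemma proj_in v : f v \in W. Proof. by case: (Hf v). Qed.
Lemma proj_orth v w : w \in W -> dotv (v - f v) w = 0.
Proof. by case: (Hf v) => _; apply. Qed.

Lemma proj_uniq v a : a \in W -> (forall w, w \in W -> dotv (v - a) w = 0) -> f v = a.
Proof.
move=> aW Ho; apply/eqP; rewrite -subr_eq0; apply/eqP/dotv_eq0.
have dW : f v - a \in W by rewrite memvB // proj_in.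
have E : f v - a = (v - a) - (v - f v) by rewrite opprB [RHS]addrC [RHS]addrA subrK.
by rewrite {1}E dotvBl Ho // proj_orth // subrr.
Qed.

Lemma proj_id x : x \in W -> f x = x.
Proof. by move=> xW; apply: proj_uniq => // w _; rewrite subrr dotv0l. Qed.

Lemma memW x : x \in W <-> f x = x.
Proof. by split => [/proj_id //|<-]; apply: proj_in. Qed.

Lemma proj_idem v : f (f v) = f v.
Proof. exact/proj_id/proj_in. Qed.

Lemma proj_add u v : f (u + v) = f u + f v.
Proof.
apply: proj_uniq; first by rewrite memvD // proj_in.
move=> w wW; have -> : u + v - (f u + f v) = (u - f u) + (v - f v).
  by rewrite opprD addrACA.
by rewrite dotvDl !proj_orth // addr0.
Qed.

Lemma proj_scale k v : f (k *: v) = k *: f v.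
Proof.
apply: proj_uniq; first exact: (memvZ k (proj_in v)).
by move=> w wW; rewrite -scalerBr dotvZl proj_orth // mulr0.
Qed.

Lemma proj0 : f 0 = 0.
Proof. by have := proj_scale 0 0; rewrite !scale0r. Qed.

Lemma proj_sub u v : f (u - v) = f u - f v.
Proof. by rewrite proj_add -[- v]scaleN1r proj_scale scaleN1r. Qed.

Lemma proj_sum I (s : seq I) (P : pred I) (F : I -> V) :
  f (\sum_(i <- s | P i) F i) = \sum_(i <- s | P i) f (F i).
Proof.
elim/big_rec2: _ => [|i x y _ Hxy]; first by rewrite proj0.
by rewrite proj_add Hxy.
Qed.

Lemma dotv_projl v w : w \in W -> dotv (f v) w = dotv v w.
Proof.
move=> wW; have := proj_orth v wW; rewrite dotvBl => /eqP; rewrite subr_eq0.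
by move/eqP->.
Qed.

End Proj.


Section Decomp.
Variables (R : realType) (n r : nat).
Local Notation V := 'cV[R]_n.
Variables (W : 'I_r -> {vspace V}) (proj : 'I_r -> V -> V).
Hypothesis Horth : forall l1 l2, l1 != l2 -> forall u v, u \in W l1 -> v \in W l2 -> dotv u v = 0.
Hypothesis Hsum : (\sum_(l < r) W l)%VS = fullv.
Hypothesis Hproj : forall l, is_orth_proj (W l) (proj l).

Lemma proj_cross l l' v : l != l' -> proj l (proj l' v) = 0.
Proof.
move=> ne; apply: proj_uniq => //; first exact: mem0v.
move=> w wW; rewrite subr0.
have ne' : l' != l by rewrite eq_sym.
exact: (Horth ne' (proj_in (Hproj l') v) wW).
Qed.

Lemma decomp v : v = \sum_l proj l v.
Proof.
apply/eqP; rewrite -subr_eq0; apply/eqP; set u := v - _.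
have Hu : forall l w, w \in W l -> dotv u w = 0.
  move=> l w wW; rewrite dotvBl dotv_suml (bigD1 l) //= (dotv_projl (Hproj l)) //.
  rewrite big1 ?addr0 ?subrr // => l' ne.
  exact: (Horth ne (proj_in (Hproj l') v) wW).
have : u \in fullv by apply: memvf.
rewrite -Hsum => /memv_sumP [ws Hws Eu].
have : dotv u u = 0.
  by rewrite {2}Eu dotv_sumr big1 // => l _; apply: Hu; apply: Hws.
exact: dotv_eq0.
Qed.

Lemma dot_decomp u v : dotv u v = \sum_l dotv (proj l u) (proj l v).
Proof.
rewrite {1}(decomp u) dotv_suml; apply: eq_bigr => l _.
by rewrite dotvC -(dotv_projl (Hproj l)) ?(proj_in (Hproj l)) // dotvC.
Qed.

End Decomp.


Section Comb.
Variables (R : realType) (n m : nat).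
Local Notation V := 'cV[R]_n.

Definition comb (a : 'I_m -> V) (d : 'cV[R]_m) : V := \sum_i d i 0 *: a i.

Lemma comb_dot a b s t : dotv (comb a s) (comb b t) =
  \sum_i \sum_j s i 0 * t j 0 * dotv (a i) (b j).
Proof.
rewrite /comb dotv_suml; apply: eq_bigr => i _.
rewrite dotvZl dotv_sumr mulr_sumr; apply: eq_bigr => j _.
by rewrite dotvZr mulrA [s i 0 * _]mulrC.
Qed.

Lemma comb_sub a d d' : comb a (d - d') = comb a d - comb a d'.
Proof.
by rewrite /comb -sumrB; apply: eq_bigr => i _; rewrite !mxE scalerBl.
Qed.

Lemma comb0 a : comb a 0 = 0.
Proof. by rewrite /comb big1 // => i _; rewrite mxE scale0r. Qed.

Lemma comb_delta a k : comb a (delta_mx k 0) = a k.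
Proof.
rewrite /comb (bigD1 k) //= big1 ?addr0 => [|i ne]; first by rewrite mxE !eqxx scale1r.
by rewrite mxE (negbTE ne) scale0r.
Qed.

Lemma proj_comb (W : {vspace V}) f a d : is_orth_proj W f ->
  f (comb a d) = comb (fun k => f (a k)) d.
Proof.
move=> Hf; rewrite /comb (proj_sum Hf); apply: eq_bigr => i _.
exact: (proj_scale Hf).
Qed.

Lemma mul_comb (A : 'M[R]_n) a d : A *m comb a d = comb (fun k => A *m a k) d.
Proof.
rewrite /comb mulmx_sumr; apply: eq_bigr => i _; by rewrite scalemxAr.
Qed.

Lemma gram_comb a b : (forall i j, dotv (a i) (a j) = dotv (b i) (b j)) ->
  forall d, comb a d = 0 -> comb b d = 0.
Proof.
move=> G d H0; apply: dotv_eq0; rewrite comb_dot.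
have E : \sum_i \sum_j d i 0 * d j 0 * dotv (a i) (a j) = 0.
  by rewrite -comb_dot H0 dotv0l.
rewrite -[RHS]E; apply: eq_bigr => i _; apply: eq_bigr => j _.
by rewrite G.
Qed.

Lemma gram_comb_eq a b : (forall i j, dotv (a i) (a j) = dotv (b i) (b j)) ->
  forall d d', comb a d = comb a d' -> comb b d = comb b d'.
Proof.
move=> G d d' E; apply/eqP; rewrite -subr_eq0 -comb_sub; apply/eqP.
by apply: gram_comb => //; rewrite comb_sub E subrr.
Qed.

Lemma span_comb (p : 'I_m -> V) :
  (<<[seq p i | i <- enum 'I_m]>>)%VS = fullv -> forall v, exists d, v = comb p d.
Proof.
move=> Hs v; have : v \in fullv by apply: memvf.
rewrite -Hs span_def big_map big_enum /= => /memv_sumP [vs Hvs ->].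
have H : forall i, exists k : R, vs i = k *: p i.
  by move=> i; apply/vlineP; apply: Hvs.
have [c Hc] := fin_all_exists H.
exists (\col_i c i); rewrite /comb; apply: eq_bigr => i _.
by rewrite mxE Hc.
Qed.

End Comb.


Section Mx.
Variables (R : realType).

Definition mxc n m (a : 'I_m -> 'cV[R]_n) : 'M[R]_(n, m) := \matrix_(i, j) a j i 0.

Lemma comb_entry n m (a : 'I_m -> 'cV[R]_n) d i : comb a d i 0 = \sum_k d k 0 * a k i 0.
Proof. by rewrite /comb summxE; apply: eq_bigr => k _; rewrite mxE. Qed.

Lemma mxcE n m (a : 'I_m -> 'cV[R]_n) d : mxc a *m d = comb a d.
Proof.
apply/matrixP => i j; rewrite (ord1 j) comb_entry mxE; apply: eq_bigr => k _.
by rewrite mxE mulrC.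
Qed.

Lemma comb_ext n m (a b : 'I_m -> 'cV[R]_n) d : a =1 b -> comb a d = comb b d.
Proof. by move=> E; rewrite /comb; apply: eq_bigr => i _; rewrite E. Qed.

Lemma comb_comb n m k (a : 'I_m -> 'cV[R]_n) (c : 'I_k -> 'cV[R]_m) v :
  comb a (comb c v) = comb (fun j => comb a (c j)) v.
Proof.
rewrite -!mxcE mulmxA; congr mulmx; apply/matrixP => i j.
rewrite [RHS]mxE -mxcE !mxE; apply: eq_bigr => k0 _; by rewrite !mxE.
Qed.

Lemma comb_basis n (v : 'cV[R]_n) : comb (fun j => delta_mx j 0) v = v.
Proof.
apply/matrixP => i j; rewrite (ord1 j) comb_entry (bigD1 i) //= big1 ?addr0.
  by rewrite mxE !eqxx mulr1.
by move=> k ne; rewrite mxE eq_sym (negbTE ne) mulr0.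
Qed.

Lemma comb_add n m (a : 'I_m -> 'cV[R]_n) d d' : comb a (d + d') = comb a d + comb a d'.
Proof. by rewrite -!mxcE mulmxDr. Qed.

Lemma comb_scale n m (a : 'I_m -> 'cV[R]_n) k d : comb a (k *: d) = k *: comb a d.
Proof. by rewrite -!mxcE scalemxAr. Qed.

Lemma lin_mat n (F : 'cV[R]_n -> 'cV[R]_n) :
  (forall u v, F (u + v) = F u + F v) -> (forall k v, F (k *: v) = k *: F v) ->
  exists M : 'M[R]_n, forall v, M *m v = F v.
Proof.
move=> FD FZ; exists (mxc (fun j => F (delta_mx j 0))) => v.
rewrite mxcE -{2}(comb_basis v) /comb.
have F0 : F 0 = 0 by have := FZ 0 0; rewrite !scale0r.
elim/big_rec2: _ => [|i x y _ ->]; first by rewrite F0.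
by rewrite FD FZ.
Qed.

Lemma delta_dot n i (w : 'cV[R]_n) : dotv (delta_mx i 0) w = w i 0.
Proof.
rewrite dotvE (bigD1 i) //= big1 ?addr0; first by rewrite mxE !eqxx mul1r.
by move=> k ne; rewrite mxE (negbTE ne) mul0r.
Qed.

Lemma mul_delta_entry n (M : 'M[R]_n) i j : (M *m (delta_mx j 0 : 'cV[R]_n)) i 0 = M i j.
Proof.
rewrite mxE (bigD1 j) //= big1 ?addr0; first by rewrite mxE !eqxx mulr1.
by move=> k ne; rewrite mxE (negbTE ne) mulr0.
Qed.

Lemma iso_orth n (A : 'M[R]_n) :
  (forall u v, dotv (A *m u) (A *m v) = dotv u v) -> A^T *m A = 1%:M.
Proof.
move=> H; apply/matrixP => i j.
have := H (delta_mx i 0) (delta_mx j 0).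
rewrite dotv_mull mulmxA !delta_dot mul_delta_entry => ->.
by rewrite !mxE eqxx andbT.
Qed.

Lemma orth_iso n (A : 'M[R]_n) : A^T *m A = 1%:M ->
  forall u v, dotv (A *m u) (A *m v) = dotv u v.
Proof. by move=> H u v; rewrite dotv_mull mulmxA H mul1mx. Qed.

End Mx.


Section Ind.
Variables (R : realType) (n m : nat).
Local Notation V := 'cV[R]_n.
Variables (p : 'I_m -> V) (f : V -> V) (pi : {perm 'I_m}).

Lemma in_proj_set k : f (p k) \in proj_set p f.
Proof. by apply: map_f; rewrite mem_enum. Qed.

Lemma induced_map_val : respects p f pi ->
  forall k, induced_map p f pi (f (p k)) = f (p (pi k)).
Proof.
move=> Hr k; rewrite /induced_map; case: pickP => [k0 /eqP Hk0 | H]; last first.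
  by have := H k; rewrite eqxx.
have [q' _ Hset] := Hr _ (in_proj_set k).
have h1 : pi k \in pi @: eq_class p f (f (p k)) by apply: imset_f; rewrite inE.
have h2 : pi k0 \in pi @: eq_class p f (f (p k)) by apply: imset_f; rewrite inE Hk0.
by move: h1 h2; rewrite Hset !inE => /eqP -> /eqP ->.
Qed.

Lemma induced_gram : induced_geom_aut p f pi ->
  forall k k', dotv (f (p (pi k))) (f (p (pi k'))) = dotv (f (p k)) (f (p k')).
Proof.
move=> [Hr [_ _ Hiso]] k k'.
have [h1 h2] := Hiso _ _ (in_proj_set k) (in_proj_set k').
have [h3 _] := Hiso _ _ (in_proj_set k') (in_proj_set k).
rewrite !induced_map_val // in h1 h2 h3.
symmetry; apply: polar; apply/vnorm_eq => //.
Qed.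

End Ind.


Section Fwd.
Variables (R : realType) (n m : nat).
Local Notation V := 'cV[R]_n.
Variables (p : 'I_m -> V) (pi : {perm 'I_m}) (W : {vspace V}) (f : V -> V).
Hypothesis Hf : is_orth_proj W f.
Variable A : 'M[R]_n.
Hypothesis HAA : A *m A^T = 1%:M.
Hypothesis HAp : forall i, A *m p i = p (pi i).
Hypothesis HW : forall x, (exists2 w, w \in W & A *m w = x) <-> x \in W.

Lemma forward : induced_geom_aut p f pi.
Proof.
have HA : A^T *m A = 1%:M by apply: mulmx1C.
have Hiso := orth_iso HA.
have Hinj : injective (fun v : V => A *m v).
  by move=> u v E; rewrite -(mul1mx u) -(mul1mx v) -HA -!mulmxA E.
have Hcomm : forall v, f (A *m v) = A *m f v.
  move=> v; apply: (proj_uniq Hf).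
    by apply/HW; exists (f v) => //; apply: (proj_in Hf).
  move=> w /HW [w' w'W <-]; rewrite -mulmxBr Hiso.
  exact: (proj_orth Hf).
have Hfp : forall k, f (p (pi k)) = A *m f (p k) by move=> k; rewrite -HAp Hcomm.
have Hr : respects p f pi.
  move=> q /mapP [k0 _ ->]; exists (f (p (pi k0))); first exact: in_proj_set.
  apply/setP => k; rewrite -{1}(permKV pi k) mem_imset; last exact: perm_inj.
  by rewrite !inE -{2}(permKV pi k) !Hfp (inj_eq Hinj).
split => //; split.
- by move=> q /mapP [k _ ->]; rewrite induced_map_val //; apply: in_proj_set.
- move=> q q' /mapP [k _ ->] /mapP [k' _ ->]; rewrite !induced_map_val //.
  by rewrite !Hfp => /Hinj.
- move=> q q' /mapP [k _ ->] /mapP [k' _ ->]; rewrite !induced_map_val // !Hfp.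
  by rewrite -mulmxBr; split; apply/vnorm_eq; rewrite Hiso.
Qed.

End Fwd.


Section Bwd.
Variables (R : realType) (n m r : nat).
Local Notation V := 'cV[R]_n.
Variables (p : 'I_m -> V) (W : 'I_r -> {vspace V}) (proj : 'I_r -> V -> V) (pi : {perm 'I_m}).
Hypothesis Hspan : (<<[seq p i | i <- enum 'I_m]>>)%VS = fullv.
Hypothesis Horth : forall l1 l2, l1 != l2 -> forall u v, u \in W l1 -> v \in W l2 -> dotv u v = 0.
Hypothesis Hsum : (\sum_(l < r) W l)%VS = fullv.
Hypothesis Hproj : forall l, is_orth_proj (W l) (proj l).
Hypothesis Hind : forall l, induced_geom_aut p (proj l) pi.

Lemma backward : geom_aut_idx p pi /\
   exists A : 'M[R]_n,
     [/\ A *m A^T = 1%:M, forall i, A *m p i = p (pi i) &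
         forall l x, (exists2 w, w \in W l & A *m w = x) <-> x \in W l].
Proof.
pose q k := p (pi k).
have Gl : forall l k k', dotv (proj l (q k)) (proj l (q k')) = dotv (proj l (p k)) (proj l (p k')).
  by move=> l; apply: induced_gram.
have Gg : forall k k', dotv (q k) (q k') = dotv (p k) (p k').
  by move=> k k'; rewrite !(dot_decomp Horth Hsum Hproj); apply: eq_bigr => l _.
have Hex : forall j : 'I_n, exists d, delta_mx j 0 = comb p d.
  by move=> j; apply: span_comb.
have [c Hc] := fin_all_exists Hex.
have HC : forall v, comb p (comb c v) = v.
  move=> v; rewrite comb_comb -{2}(comb_basis v); apply: comb_ext => j.
  by rewrite Hc.
pose Afun v := \sum_l proj l (comb q (comb c (proj l v))).
have [A HA] : exists A : 'M[R]_n, forall v, A *m v = Afun v.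
  apply: lin_mat => [u v|k v]; rewrite /Afun.
    rewrite -big_split; apply: eq_bigr => l _.
    by rewrite (proj_add (Hproj l)) !comb_add (proj_add (Hproj l)).
  rewrite scaler_sumr; apply: eq_bigr => l _.
  by rewrite (proj_scale (Hproj l)) !comb_scale (proj_scale (Hproj l)).
have HAp : forall k, A *m p k = q k.
  move=> k; rewrite HA /Afun [RHS](decomp Horth Hsum Hproj); apply: eq_bigr => l _.
  rewrite (proj_comb _ _ (Hproj l)) -(comb_delta (fun k => proj l (q k)) k).
  have G' : forall i j, dotv (proj l (p i)) (proj l (p j)) = dotv (proj l (q i)) (proj l (q j)).
    by move=> i j; rewrite Gl.
  have E : comb (fun k0 => proj l (p k0)) (comb c (proj l (p k))) =
           comb (fun k0 => proj l (p k0)) (delta_mx k 0).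
    rewrite comb_delta -(proj_comb _ _ (Hproj l)) HC.
    exact: (proj_idem (Hproj l)).
  by rewrite (gram_comb_eq G' E).
have Hdot : forall u v, dotv (A *m u) (A *m v) = dotv u v.
  move=> u v; have [s ->] := span_comb Hspan u; have [t ->] := span_comb Hspan v.
  rewrite !mul_comb !(comb_ext _ HAp) !comb_dot.
  by apply: eq_bigr => i _; apply: eq_bigr => j _; rewrite Gg.
have HAT : A^T *m A = 1%:M by apply: iso_orth.
have HAA : A *m A^T = 1%:M by apply: mulmx1C.
have Hcomm : forall l v, A *m proj l v = proj l (A *m v).
  move=> l v; rewrite !HA /Afun (proj_sum (Hproj l)) (bigD1 l) // [RHS](bigD1 l) //.
  rewrite (proj_idem (Hproj l)) (proj_idem (Hproj l)) !big1 ?addr0 // => l' ne.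
    by rewrite (proj_cross Horth Hproj) // eq_sym.
  rewrite (proj_cross Horth Hproj) // comb0 comb0.
  exact: (proj0 (Hproj l')).
split.
  move=> i j; split; apply/vnorm_eq; first exact: Gg.
  by rewrite !dotvBl !dotvBr -!/(q _) !Gg.
exists A; split => // l x; split.
  move=> [w wW <-]; apply/(memW (Hproj l)).
  by rewrite -Hcomm (proj_id (Hproj l) wW).
move=> xW; exists (proj l (A^T *m x)); first exact: (proj_in (Hproj l)).
by rewrite Hcomm mulmxA HAA mul1mx (proj_id (Hproj l) xW).
Qed.

End Bwd.

Unset Implicit Arguments.

Theorem lemma2 (R : realType) (n m r : nat) (p : 'I_m -> 'cV[R]_n)
  (W : 'I_r -> {vspace 'cV[R]_n}) (proj : 'I_r -> 'cV[R]_n -> 'cV[R]_n)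
  (pi : {perm 'I_m}) :
  injective p ->
  (forall i, rational_pt (p i)) ->
  (<<[seq p i | i <- enum 'I_m]>>)%VS = fullv ->
  (forall l1 l2, l1 != l2 -> forall u v, u \in W l1 -> v \in W l2 -> dotv u v = 0) ->
  (\sum_(l < r) W l)%VS = fullv ->
  (forall l, is_orth_proj (W l) (proj l)) ->
  (geom_aut_idx p pi /\
   exists A : 'M[R]_n,
     [/\ A *m A^T = 1%:M, forall i, A *m p i = p (pi i) &
         forall l x, (exists2 w, w \in W l & A *m w = x) <-> x \in W l])
  <-> (forall l, induced_geom_aut p (proj l) pi).
Proof.
move=> Hinj Hrat Hspan Horth Hsum Hproj; split.
- move=> [_ [A [HAA HAp HW]]] l; exact: (forward (Hproj l) HAA HAp (HW l)).
- move=> Hind; exact: (backward Hspan Horth Hsum Hproj Hind).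
Qed.
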